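(* Assume $I_\delta=0$. There exists a constant $C_{\mathcal{G}}$, independent of $\delta$ (and of $c\in[c_0,c_1]$ and $R_0\in\mathcal{R}_c$), such that for every $\delta$-admissible $S\in\mathsf{X}$ and $G=\mathcal{G}(S)$, $$\|\mathcal{A}G\|_\infty\le C_{\mathcal{G}}\,\delta,\qquad \|\mathcal{A}^2G\|_\infty\le C_{\mathcal{G}}\big(1+\|S''\|_\infty\big)\delta^2 .$$
   Context: $(\mathcal{A}F)(x)=\int_{x-1/2}^{x+1/2}F(s)\,ds$, $\Delta_1F(x)=F(x+1)-2F(x)+F(x-1)$, $a(k)=\frac{\sin(k/2)}{k/2}$, $\Psi_0'(r)=\mathrm{sgn}(r)$. Potentials: $(\Psi_\delta)_{\delta>0}$ is a family of $C^2$ functions such that $\Psi_\delta'(r)=\mathrm{sgn}(r)$ for $r\notin(-\delta,\delta)$, and $|\Psi_\delta'|\le C_\Psi$, $|\Psi_\delta''|\le C_\Psi/\delta$ on $\mathbb{R}$ with $C_\Psi$ independent of $\delta$; $I_\delta:=\frac12\int_{\mathbb{R}}(\Psi_\delta'-\Psi_0')\,dr$. Unperturbed waves (standing hypothesis, a known result): there are constants $0<c_0<1$ and $x_0,r_0,d_0,D_0>0$ such that for every $c\in[c_0,1)$ the equation $a(k)=c$ has exactly one positive solution $k_c$, and there is a two-parameter family $\mathcal{R}_c$ of functions $R_0\in W^{2,\infty}(\mathbb{R})$ solving $c^2R_0''=\Delta_1(R_0-\mathrm{sgn}(R_0))$ with $R_0(0)=0$, given by $R_0=\bar R_0+\alpha(\cos(k_c\cdot)-1)+\beta\sin(k_c\cdot)$,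 $(\alpha,\beta)$ in an open neighbourhood $U_c$ of $0\in\mathbb{R}^2$, where $\bar R_0$ is a fixed member for which $\lim_{x\to+\infty}\bar R_0(x)$ exists and $\lim_{x\to-\infty}(\bar R_0(x)-\alpha_c^-(\cos(k_cx)-1)-\beta_c^-\sin(k_cx))$ exists for some constants $\alpha_c^-,\beta_c^-$. Every $R_0\in\mathcal{R}_c$ satisfies $\|R_0\|_\infty\le D_0(1-c^2)^{-1}$, $R_0(x)>r_0$ for $x>x_0$, $R_0(x)<-r_0$ for $x<-x_0$, $R_0'(x)>d_0$ for $|x|<x_0$. Setting: $c_1\in(c_0,1)$ fixed, $c\in[c_0,c_1]$, $R_0\in\mathcal{R}_c$ fixed. $\mathsf{X}:=\{S\in W^{2,\infty}(\mathbb{R}):S(0)=0,\ \lim_{x\to+\infty}S(x)\text{ exists}\}$. $\mathcal{G}(S)(x):=\Psi_\delta'(R_0(x)+S(x))-\Psi_0'(R_0(x))$. $S\in\mathsf{X}$ is called $\delta$-admissible if there exist $x_-<0<x_+$ with: $R_0(x_\pm)+S(x_\pm)=\pm\delta$; $R_0(x)+S(x)<-\delta$ for $x<x_-$; $R_0(x)+S(x)>\delta$ for $x>x_+$; and $\frac12R_0'(0)<R_0'(x)+S'(x)<2R_0'(0)$ for $x_-<x<x_+$. *)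

(* Defs.v *)
From Stdlib Require Import Reals Lra ClassicalEpsilon.
Open Scope R_scope.

(* sign function; Psi_0'(r) = sgn r (value 0 at r = 0, a null set). *)
Definition sgn (r : R) : R :=
  if Rlt_dec 0 r then 1 else if Rlt_dec r 0 then -1 else 0.

(* Riemann integral as a total function: the value of the integral when f is
   Riemann integrable on [a,b] (which is the case for every integrand used
   below); RiemannInt does not depend on the integrability proof. *)
Definition RInt (f : R -> R) (a b : R) : R :=
  epsilon (inhabits 0)
    (fun v => exists pr : Riemann_integrable f a b, RiemannInt pr = v).

Definition Aop (F : R -> R) (x : R) : R := RInt F (x - 1/2) (x + 1/2).

Definition Delta1 (F : R -> R) (x : R) : R := F (x + 1) - 2 * F x + F (x - 1).

Definition afun (k : R) : R := sin (k / 2) / (k / 2).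

Definition bounded (f : R -> R) : Prop := exists M, forall x, Rabs (f x) <= M.

(* f in W^{2,inf}(R), with f' its (classical) derivative: f bounded, f
   differentiable with derivative f', f' bounded and Lipschitz
   (i.e. f'' in L^inf). *)
Definition W2inf (f f' : R -> R) : Prop :=
  (forall x, derivable_pt_lim f x (f' x)) /\ bounded f /\ bounded f' /\
  exists L, forall x y, Rabs (f' x - f' y) <= L * Rabs (x - y).

(* ||f''||_inf <= M, expressed as: f' is M-Lipschitz *)
Definition second_deriv_bound (f' : R -> R) (M : R) : Prop :=
  forall x y, Rabs (f' x - f' y) <= M * Rabs (x - y).

Definition has_lim_pinf (f : R -> R) : Prop :=
  exists l, forall eps, eps > 0 -> exists M, forall x, x > M -> Rabs (f x - l) < eps.

Definition has_lim_minf (f : R -> R) : Prop :=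
  exists l, forall eps, eps > 0 -> exists M, forall x, x < M -> Rabs (f x - l) < eps.

Definition improper_int_R (f : R -> R) (v : R) : Prop :=
  (forall a b, inhabited (Riemann_integrable f a b)) /\
  forall eps, eps > 0 -> exists T, forall a b, a < - T -> b > T ->
    Rabs (RInt f a b - v) < eps.

Definition Idelta_is (dPsi : R -> R -> R) (delta v : R) : Prop :=
  exists w, improper_int_R (fun r => dPsi delta r - sgn r) w /\ v = w / 2.

Definition Rmem (Rbar : R -> R -> R) (kc : R -> R) (c alpha beta : R) (x : R) : R :=
  Rbar c x + alpha * (cos (kc c * x) - 1) + beta * sin (kc c * x).

Definition dRmem (dRbar : R -> R -> R) (kc : R -> R) (c alpha beta : R) (x : R) : R :=
  dRbar c x - alpha * kc c * sin (kc c * x) + beta * kc c * cos (kc c * x).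

Definition Gop (dPsi : R -> R -> R) (delta : R) (R0 S : R -> R) (x : R) : R :=
  dPsi delta (R0 x + S x) - sgn (R0 x).

Definition in_X (S S' : R -> R) : Prop :=
  W2inf S S' /\ S 0 = 0 /\ has_lim_pinf S.

Definition admissible (delta : R) (R0 R0' S S' : R -> R) : Prop :=
  exists xm xp, xm < 0 < xp /\
    R0 xp + S xp = delta /\ R0 xm + S xm = - delta /\
    (forall x, x < xm -> R0 x + S x < - delta) /\
    (forall x, x > xp -> R0 x + S x > delta) /\
    (forall x, xm < x < xp ->
       / 2 * R0' 0 < R0' x + S' x /\ R0' x + S' x < 2 * R0' 0).

(* Main.v *)
Require Import Defs.
From Stdlib Require Import Reals.
Open Scope R_scope.
From Stdlib Require Import Lra FunctionalExtensionality ClassicalEpsilon.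
From Coquelicot Require Import Coquelicot.

Lemma lip_cont_pt (f : R -> R) (K : R) :
  (forall x y, Rabs (f x - f y) <= K * Rabs (x - y)) -> forall x, continuity_pt f x.
Proof.
  intros H x eps Heps.
  assert (HK : 0 < Rabs K + 1) by (pose proof (Rabs_pos K); lra).
  exists (eps / (Rabs K + 1)). split.
  - apply Rdiv_lt_0_compat; lra.
  - intros y [_ Hy]. simpl in *. unfold R_dist in *.
    eapply Rle_lt_trans. apply H.
    apply Rle_lt_trans with (Rabs K * Rabs (y - x)).
    + apply Rmult_le_compat_r. apply Rabs_pos. apply RRle_abs.
    + apply Rle_lt_trans with ((Rabs K + 1) * Rabs (y - x)).
      * apply Rmult_le_compat_r. apply Rabs_pos. lra.
      * apply Rmult_lt_reg_l with (/ (Rabs K + 1)). apply Rinv_0_lt_compat; lra.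
        rewrite <- Rmult_assoc, Rinv_l by lra. rewrite Rmult_1_l.
        unfold Rdiv in Hy. rewrite Rmult_comm. exact Hy.
Qed.

Lemma lip_cont (f : R -> R) (K : R) :
  (forall x y, Rabs (f x - f y) <= K * Rabs (x - y)) -> forall x, continuous f x.
Proof. intros H x. apply continuity_pt_filterlim. eapply lip_cont_pt; eauto. Qed.

Lemma lip_exRInt (f : R -> R) (K : R) :
  (forall x y, Rabs (f x - f y) <= K * Rabs (x - y)) -> forall a b, ex_RInt f a b.
Proof. intros H a b. apply (@ex_RInt_continuous R_CompleteNormedModule). intros; eapply lip_cont; eauto. Qed.

Lemma RInt_conv (f : R -> R) a b : ex_RInt f a b -> Defs.RInt f a b = RInt f a b.
Proof.
  intros Hex. unfold Defs.RInt.
  assert (Hp : exists v, exists pr : Riemann_integrable f a b, RiemannInt pr = v).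
  { exists (RiemannInt (ex_RInt_Reals_0 _ _ _ Hex)). eexists; reflexivity. }
  destruct (epsilon_spec (inhabits 0) _ Hp) as [pr Hpr].
  rewrite <- Hpr. symmetry. apply RInt_Reals.
Qed.

Lemma sgn_pos x : 0 < x -> sgn x = 1.
Proof. intros; unfold sgn; destruct (Rlt_dec 0 x); [reflexivity| lra]. Qed.
Lemma sgn_neg x : x < 0 -> sgn x = -1.
Proof. intros; unfold sgn; destruct (Rlt_dec 0 x); [lra|]. destruct (Rlt_dec x 0); [reflexivity|lra]. Qed.
Lemma sgn_0 : sgn 0 = 0.
Proof. unfold sgn; destruct (Rlt_dec 0 0); [lra|]. destruct (Rlt_dec 0 0); [lra|reflexivity]. Qed.
Lemma sgn_bound x : Rabs (sgn x) <= 1.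
Proof. unfold sgn; destruct (Rlt_dec 0 x); [|destruct (Rlt_dec x 0)]; unfold Rabs;
  destruct Rcase_abs; lra. Qed.

Lemma ex_RInt_sgnmul (f : R -> R) (k : R) :
  (forall x, continuous f x) -> forall u v, ex_RInt (fun s => sgn (s - k) * f s) u v.
Proof.
  intros Hf.
  assert (H1 : forall u, ex_RInt (fun s => sgn (s - k) * f s) u k).
  { intro u. destruct (Rlt_le_dec u k) as [Hu|Hu].
    - apply ex_RInt_ext with (fun s => opp (f s)).
      + intros x [Hx1 Hx2]. rewrite Rmin_left in Hx1 by lra. rewrite Rmax_right in Hx2 by lra.
        rewrite sgn_neg by lra. unfold opp; simpl; ring.
      + apply (ex_RInt_opp (V:=R_NormedModule)), (@ex_RInt_continuous R_CompleteNormedModule). intros; apply Hf.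
    - destruct (Req_dec u k) as [Heq|Hne]. { subst u. apply ex_RInt_point. }
      apply ex_RInt_ext with f.
      + intros x [Hx1 Hx2]. rewrite Rmin_right in Hx1 by lra. rewrite Rmax_left in Hx2 by lra.
        rewrite sgn_pos by lra. simpl; ring.
      + apply (@ex_RInt_continuous R_CompleteNormedModule). intros; apply Hf. }
  intros u v. apply ex_RInt_Chasles with k. apply H1. apply ex_RInt_swap, H1.
Qed.

Lemma ex_RInt_sgn k u v : ex_RInt (fun s => sgn (s - k)) u v.
Proof.
  apply ex_RInt_ext with (fun s => sgn (s - k) * (fun _ => 1) s).
  intros; simpl; ring. apply ex_RInt_sgnmul. intros; apply continuous_const.
Qed.

Definition clamp (p q t : R) := Rmax p (Rmin q t).

Lemma clamp_lip p q u v : Rabs (clamp p q u - clamp p q v) <= 1 * Rabs (u - v).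
Proof.
  unfold clamp, Rmax, Rmin.
  repeat (destruct Rle_dec); unfold Rabs; repeat destruct Rcase_abs; lra.
Qed.

Lemma clamp_in p q t : p <= q -> p <= clamp p q t <= q.
Proof. intros; unfold clamp, Rmax, Rmin; repeat destruct Rle_dec; lra. Qed.

Lemma supp_bound (g : R -> R) p q K a b :
  p <= q -> a <= b -> (forall u v, ex_RInt g u v) ->
  (forall s, s < p \/ s > q -> g s = 0) -> (forall s, Rabs (g s) <= K) ->
  Rabs (RInt g a b) <= K * (q - p).
Proof.
  intros Hpq Hab Hex H0 HK.
  assert (HK0 : 0 <= K) by (eapply Rle_trans; [apply Rabs_pos| apply (HK 0)]).
  assert (Z : forall u v, (forall s, Rmin u v < s < Rmax u v -> s < p \/ s > q) -> RInt g u v = 0).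
  { intros u v Hs. rewrite (RInt_ext g (fun _ => 0)).
    rewrite RInt_const. unfold scal; simpl; unfold mult; simpl; ring.
    intros x Hx. apply H0, Hs, Hx. }
  destruct (Rlt_le_dec b p) as [Hb|Hb].
  { rewrite Z. rewrite Rabs_R0. apply Rmult_le_pos; lra.
    intros s Hs. rewrite Rmax_right in Hs by lra. lra. }
  destruct (Rlt_le_dec q a) as [Ha|Ha].
  { rewrite Z. rewrite Rabs_R0. apply Rmult_le_pos; lra.
    intros s Hs. rewrite Rmin_left in Hs by lra. lra. }
  set (a' := Rmax a p). set (b' := Rmin b q).
  assert (Ha' : a <= a' /\ p <= a' /\ a' <= q) by (unfold a', Rmax; destruct Rle_dec; lra).
  assert (Hb' : b' <= b /\ b' <= q /\ p <= b') by (unfold b', Rmin; destruct Rle_dec; lra).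
  assert (Hab' : a' <= b') by (unfold a', b', Rmax, Rmin; repeat destruct Rle_dec; lra).
  rewrite <- (RInt_Chasles g a a' b) by auto.
  rewrite <- (RInt_Chasles g a' b' b) by auto.
  rewrite (Z a a'), (Z b' b).
  - change (plus 0 (plus (RInt g a' b') 0)) with (0 + (RInt g a' b' + 0)).
    rewrite Rplus_0_l, Rplus_0_r.
    eapply Rle_trans. apply abs_RInt_le_const with (M := K); auto.
    rewrite Rmult_comm. apply Rmult_le_compat_l; lra.
  - intros s Hs. rewrite Rmin_left, Rmax_right in Hs by lra.
    unfold b', Rmin in *; destruct Rle_dec; lra.
  - intros s Hs. rewrite Rmin_left, Rmax_right in Hs by lra.
    unfold a', Rmax in *; destruct Rle_dec; lra.
Qed.

Lemma ex_RInt_minusR (f g : R -> R) a b : ex_RInt f a b -> ex_RInt g a b -> ex_RInt (fun x => f x - g x) a b.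
Proof. intros; exact (ex_RInt_minus f g a b H H0). Qed.
Lemma ex_RInt_plusR (f g : R -> R) a b : ex_RInt f a b -> ex_RInt g a b -> ex_RInt (fun x => f x + g x) a b.
Proof. intros; exact (ex_RInt_plus f g a b H H0). Qed.
Lemma ex_RInt_scalR (f : R -> R) k a b : ex_RInt f a b -> ex_RInt (fun x => k * f x) a b.
Proof. intros; exact (ex_RInt_scal f a b k H). Qed.
Lemma RInt_minusR (f g : R -> R) a b : ex_RInt f a b -> ex_RInt g a b -> RInt (fun x => f x - g x) a b = RInt f a b - RInt g a b.
Proof. intros; exact (RInt_minus f g a b H H0). Qed.
Lemma RInt_plusR (f g : R -> R) a b : ex_RInt f a b -> ex_RInt g a b -> RInt (fun x => f x + g x) a b = RInt f a b + RInt g a b.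
Proof. intros; exact (RInt_plus f g a b H H0). Qed.
Lemma RInt_scalR (f : R -> R) k a b : ex_RInt f a b -> RInt (fun x => k * f x) a b = k * RInt f a b.
Proof. intros; exact (RInt_scal f a b k H). Qed.
Lemma RInt_ChaslesR (f : R -> R) a b c : ex_RInt f a b -> ex_RInt f b c -> RInt f a b + RInt f b c = RInt f a c.
Proof. intros; exact (RInt_Chasles f a b c H H0). Qed.
Lemma RInt_swapR (f : R -> R) a b : ex_RInt f a b -> RInt f b a = - RInt f a b.
Proof. intros; symmetry; exact (opp_RInt_swap f a b H). Qed.
Lemma RInt_constR (k a b : R) : RInt (fun _ => k) a b = (b - a) * k.
Proof. exact (RInt_const a b k). Qed.
Lemma RInt_derivR (f df : R -> R) a b :
  (forall x, is_derive f x (df x)) -> (forall x, continuous df x) -> RInt df a b = f b - f a.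
Proof. intros H1 H2. apply is_RInt_unique. exact (is_RInt_derive f df a b (fun x _ => H1 x) (fun x _ => H2 x)). Qed.
Lemma cont_ex (f : R -> R) : (forall x, continuous f x) -> forall u v, ex_RInt f u v.
Proof. intros H u v. apply (@ex_RInt_continuous R_CompleteNormedModule). intros; apply H. Qed.
Lemma cont_of_pt (f : R -> R) x : continuity_pt f x -> continuous f x.
Proof. apply continuity_pt_filterlim. Qed.
Lemma abs_sub_le a b : Rabs (a - b) <= Rabs a + Rabs b.
Proof. unfold Rminus; rewrite <- (Rabs_Ropp b); apply Rabs_triang. Qed.
Lemma lip_shift (f : R -> R) K k : (forall x y, Rabs (f x - f y) <= K * Rabs (x - y)) ->
  forall x y, Rabs (f (x + k) - f (y + k)) <= K * Rabs (x - y).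
Proof. intros H x y. replace (x - y) with ((x + k) - (y + k)) by ring. apply H. Qed.
Lemma RInt_bound_gen (f : R -> R) a b K : ex_RInt f a b -> (forall t, Rabs (f t) <= K) ->
  Rabs (RInt f a b) <= K * Rabs (b - a).
Proof.
  intros Hex HK. destruct (Rle_dec a b).
  - rewrite (Rabs_right (b - a)) by lra. rewrite Rmult_comm. apply abs_RInt_le_const; auto.
  - assert (Hex' : ex_RInt f b a) by (apply ex_RInt_swap; auto).
    rewrite (RInt_swapR f b a Hex'). rewrite Rabs_Ropp, (Rabs_left (b - a)) by lra.
    replace (- (b - a)) with (a - b) by ring. rewrite Rmult_comm.
    apply abs_RInt_le_const; auto. lra.
Qed.

Lemma arith2 C1 L0 M d0 e dl I : 0<=C1 -> 0<=L0 -> 0<=M -> 0<d0 -> 0<=e -> 0<dl ->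
  e*d0 <= 4*dl -> Rabs I <= e*(C1*((L0+M)*e)*(2/d0)) ->
  Rabs I + 2*C1*e*e + 2*C1*e*e <= (32*C1*(L0+1)/d0^3 + 64*C1/d0^2 + 4*C1/d0)*(1+M)*dl^2.
Proof.
  intros HC HL HM Hd He Hdl Hed HI.
  set (k := / d0). assert (Hk : 0 < k) by (apply Rinv_0_lt_compat; lra).
  assert (Hek : e <= 4*dl*k).
  { unfold k. apply Rmult_le_reg_r with d0; auto. rewrite Rmult_assoc, Rinv_l; lra. }
  assert (Hee : e*e <= (4*dl*k)*(4*dl*k)) by (apply Rmult_le_compat; lra).
  replace (e*(C1*((L0+M)*e)*(2/d0))) with (2*C1*(L0+M)*k*(e*e)) in HI by (unfold k; field; lra).
  replace (32*C1*(L0+1)/d0^3 + 64*C1/d0^2 + 4*C1/d0) with (32*C1*(L0+1)*k^3 + 64*C1*k^2 + 4*C1*k)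
    by (unfold k; field; lra).
  assert (H1 : 2*C1*(L0+M)*k*(e*e) <= 2*C1*(L0+M)*k*((4*dl*k)*(4*dl*k))).
  { apply Rmult_le_compat_l; auto. repeat apply Rmult_le_pos; lra. }
  assert (H2 : 2*C1*e*e + 2*C1*e*e <= 4*C1*((4*dl*k)*(4*dl*k))).
  { replace (2*C1*e*e + 2*C1*e*e) with (4*C1*(e*e)) by ring. apply Rmult_le_compat_l; lra. }
  assert (H3 : 0 <= C1*k*dl^2*M) by (repeat apply Rmult_le_pos; lra).
  assert (H4 : 0 <= C1*k^3*dl^2*L0*M) by (repeat apply Rmult_le_pos; lra).
  assert (H5 : 0 <= C1*k^3*dl^2) by (repeat apply Rmult_le_pos; lra).
  assert (H6 : 0 <= C1*k^2*dl^2*M) by (repeat apply Rmult_le_pos; lra).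
  assert (H7 : 0 <= C1*k*dl^2) by (repeat apply Rmult_le_pos; lra).
  assert (H8 : 0 <= C1*k^3*dl^2*M) by (repeat apply Rmult_le_pos; lra).
  nra.
Qed.

Lemma arith1 C1 L0 d0 e dl : 0<=C1 -> 0<=L0 -> 0<d0 -> 0<=e -> 0<dl -> e*d0 <= 4*dl ->
  C1 * e <= (32*C1*(L0+1)/d0^3 + 64*C1/d0^2 + 4*C1/d0) * dl.
Proof.
  intros HC HL Hd He Hdl Hed.
  set (k := / d0). assert (Hk : 0 < k) by (apply Rinv_0_lt_compat; lra).
  assert (Hek : e <= 4*dl*k).
  { unfold k. apply Rmult_le_reg_r with d0; auto. rewrite Rmult_assoc, Rinv_l; lra. }
  replace (32*C1*(L0+1)/d0^3 + 64*C1/d0^2 + 4*C1/d0) with (32*C1*(L0+1)*k^3 + 64*C1*k^2 + 4*C1*k)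
    by (unfold k; field; lra).
  assert (0 <= 32*C1*(L0+1)*k^3*dl) by (repeat apply Rmult_le_pos; lra).
  assert (0 <= 64*C1*k^2*dl) by (repeat apply Rmult_le_pos; lra).
  assert (C1 * e <= C1 * (4*dl*k)) by (apply Rmult_le_compat_l; lra).
  nra.
Qed.

Lemma contR_mult (f g : R -> R) x : continuous f x -> continuous g x -> continuous (fun y => f y * g y) x.
Proof. intros; exact (continuous_mult (K:=R_AbsRing) f g x H H0). Qed.
Lemma contR_plus (f g : R -> R) x : continuous f x -> continuous g x -> continuous (fun y => f y + g y) x.
Proof. intros; exact (continuous_plus (V:=R_NormedModule) f g x H H0). Qed.
Lemma contR_opp (f : R -> R) x : continuous f x -> continuous (fun y => - f y) x.
Proof. intros; exact (continuous_opp (V:=R_NormedModule) f x H). Qed.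

Lemma abs3 a b c : Rabs (a - 2*b + c) <= Rabs a + 2*Rabs b + Rabs c.
Proof. unfold Rabs; repeat destruct Rcase_abs; lra. Qed.
Lemma cont_shift (f : R -> R) k : (forall x, continuous f x) -> forall x, continuous (fun t => f (t + k)) x.
Proof.
  intros H x. apply (continuous_comp (fun t => t + k) f).
  apply contR_plus. apply continuous_id. apply continuous_const. apply H.
Qed.

Lemma lip_shiftm (f : R -> R) K k : (forall x y, Rabs (f x - f y) <= K * Rabs (x - y)) ->
  forall x y, Rabs (f (x - k) - f (y - k)) <= K * Rabs (x - y).
Proof. intros H x y. replace (x - y) with ((x - k) - (y - k)) by ring. apply H. Qed.
Lemma abs_pm a b c : Rabs (a + (b - c)) <= Rabs a + Rabs b + Rabs c.
Proof. unfold Rabs; repeat destruct Rcase_abs; lra. Qed.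

Notation CInt := Coquelicot.RInt.RInt.
Import Defs.

Theorem corollary3p4
  (* the family of potentials (Psi_delta)_{delta>0}, with derivatives *)
  (Psi dPsi ddPsi : R -> R -> R) (CPsi : R)
  (HPsi1 : forall delta, delta > 0 -> forall r, derivable_pt_lim (Psi delta) r (dPsi delta r))
  (HPsi2 : forall delta, delta > 0 -> forall r, derivable_pt_lim (dPsi delta) r (ddPsi delta r))
  (HPsi3 : forall delta, delta > 0 -> continuity (ddPsi delta))
  (HPsi4 : forall delta, delta > 0 -> forall r, ~ (- delta < r < delta) -> dPsi delta r = sgn r)
  (HPsi5 : forall delta, delta > 0 -> forall r, Rabs (dPsi delta r) <= CPsi)
  (HPsi6 : forall delta, delta > 0 -> forall r, Rabs (ddPsi delta r) <= CPsi / delta)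
  (* standing hypothesis: the unperturbed waves *)
  (c0 x0 r0 d0 D0 : R) (kc : R -> R) (Rbar dRbar : R -> R -> R)
  (U : R -> R -> R -> Prop) (alm blm : R -> R)
  (Hc0 : 0 < c0 < 1) (Hx0 : x0 > 0) (Hr0 : r0 > 0) (Hd0 : d0 > 0) (HD0 : D0 > 0)
  (Hkc : forall c, c0 <= c < 1 ->
     kc c > 0 /\ afun (kc c) = c /\ forall k, k > 0 -> afun k = c -> k = kc c)
  (HU0 : forall c, c0 <= c < 1 -> U c 0 0)
  (HUopen : forall c, c0 <= c < 1 -> forall a b, U c a b ->
     exists eps, eps > 0 /\ forall a' b', Rabs (a' - a) < eps -> Rabs (b' - b) < eps -> U c a' b')
  (HRbar_p : forall c, c0 <= c < 1 -> has_lim_pinf (Rbar c))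
  (HRbar_m : forall c, c0 <= c < 1 -> has_lim_minf
     (fun x => Rbar c x - alm c * (cos (kc c * x) - 1) - blm c * sin (kc c * x)))
  (HW2 : forall c, c0 <= c < 1 -> forall a b, U c a b ->
     W2inf (Rmem Rbar kc c a b) (dRmem dRbar kc c a b))
  (HR00 : forall c, c0 <= c < 1 -> forall a b, U c a b -> Rmem Rbar kc c a b 0 = 0)
  (Heq : forall c, c0 <= c < 1 -> forall a b, U c a b -> forall x y,
     c ^ 2 * (dRmem dRbar kc c a b y - dRmem dRbar kc c a b x) =
     RInt (Delta1 (fun t => Rmem Rbar kc c a b t - sgn (Rmem Rbar kc c a b t))) x y)
  (Hbnd : forall c, c0 <= c < 1 -> forall a b, U c a b -> forall x,
     Rabs (Rmem Rbar kc c a b x) <= D0 / (1 - c ^ 2))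
  (Hpos : forall c, c0 <= c < 1 -> forall a b, U c a b -> forall x,
     x > x0 -> Rmem Rbar kc c a b x > r0)
  (Hneg : forall c, c0 <= c < 1 -> forall a b, U c a b -> forall x,
     x < - x0 -> Rmem Rbar kc c a b x < - r0)
  (Hder : forall c, c0 <= c < 1 -> forall a b, U c a b -> forall x,
     Rabs x < x0 -> dRmem dRbar kc c a b x > d0)
  (* the setting *)
  (c1 : R) (Hc1 : c0 < c1 < 1) :
  exists CG : R,
    forall delta, delta > 0 -> Idelta_is dPsi delta 0 ->
    forall c, c0 <= c <= c1 ->
    forall a b, U c a b ->
    forall S S' : R -> R, in_X S S' ->
    admissible delta (Rmem Rbar kc c a b) (dRmem dRbar kc c a b) S S' ->
    (forall x, Rabs (Aop (Gop dPsi delta (Rmem Rbar kc c a b) S) x) <= CG * delta) /\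
    (forall M, second_deriv_bound S' M ->
       forall x, Rabs (Aop (Aop (Gop dPsi delta (Rmem Rbar kc c a b) S)) x)
                 <= CG * (1 + M) * delta ^ 2).
Proof.
  assert (HCP : 0 <= CPsi) by (eapply Rle_trans; [apply Rabs_pos | apply (HPsi5 1 Rlt_0_1 0)]).
  exists (32*(CPsi+1)*(4 * (D0 / (1 - c1^2) + 1) / c0^2 + 1)/d0^3 + 64*(CPsi+1)/d0^2 + 4*(CPsi+1)/d0).
  intros delta Hd HI c Hc a b Hab S S' HX Hadm.
  assert (Hc' : c0 <= c < 1) by lra.
  pose proof (Hbnd c Hc' a b Hab) as HB. pose proof (Hpos c Hc' a b Hab) as HP.
  pose proof (Hneg c Hc' a b Hab) as HN. pose proof (Hder c Hc' a b Hab) as HD.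
  pose proof (Heq c Hc' a b Hab) as HE. pose proof (HR00 c Hc' a b Hab) as HZ.
  destruct (HW2 c Hc' a b Hab) as [HR0d [_ [_ [LR HLR]]]].
  set (R0 := Rmem Rbar kc c a b) in *. set (R0' := dRmem dRbar kc c a b) in *.
  destruct HX as [[HSd [_ [_ [LS HLS]]]] [HS0 _]].
  set (C1 := CPsi + 1).
  assert (HR0'0 : R0' 0 > d0) by (apply HD; rewrite Rabs_R0; lra).
  assert (HsR0 : forall s, sgn (R0 s) = sgn s).
  { intros s. destruct (Rtotal_order s 0) as [Hs|[Hs|Hs]].
    - rewrite (sgn_neg s Hs). apply sgn_neg.
      destruct (Rlt_le_dec s (-x0)) as [Hs0|Hs0]. { pose proof (HN s Hs0); lra. }
      destruct (MVT_cor2 R0 R0' s 0 Hs (fun c _ => HR0d c)) as [xi [Hxi1 Hxi2]].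
      assert (R0' xi > d0) by (apply HD; rewrite Rabs_left by lra; lra).
      assert (0 < R0' xi * (0 - s)) by (apply Rmult_lt_0_compat; lra). lra.
    - subst s. rewrite HZ. reflexivity.
    - rewrite (sgn_pos s Hs). apply sgn_pos.
      destruct (Rlt_le_dec x0 s) as [Hs0|Hs0]. { pose proof (HP s Hs0); lra. }
      destruct (MVT_cor2 R0 R0' 0 s Hs (fun c _ => HR0d c)) as [xi [Hxi1 Hxi2]].
      assert (R0' xi > d0) by (apply HD; rewrite Rabs_right by lra; lra).
      assert (0 < R0' xi * (s - 0)) by (apply Rmult_lt_0_compat; lra). lra. }
  destruct Hadm as [xm [xp [[Hxm Hxp] [Hfp [Hfm [Hlt [Hgt Hmid]]]]]]].
  set (phi := fun s => R0 s + S s). set (phi' := fun s => R0' s + S' s).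
  assert (Hphid : forall x, derivable_pt_lim phi x (phi' x)).
  { intro x. exact (derivable_pt_lim_plus R0 S x _ _ (HR0d x) (HSd x)). }
  assert (Hphi0 : phi 0 = 0) by (unfold phi; rewrite HZ, HS0; ring).
  set (ell := xp - xm).
  assert (Hell : ell * d0 <= 4 * delta).
  { destruct (MVT_cor2 phi phi' xm xp ltac:(lra) (fun c _ => Hphid c)) as [xi [Hxi1 Hxi2]].
    destruct (Hmid xi Hxi2) as [Hm1 _]. unfold phi in Hxi1. fold (phi' xi) in Hm1.
    rewrite Hfp, Hfm in Hxi1. fold ell in Hxi1.
    assert (d0 * ell <= 2 * phi' xi * ell) by (apply Rmult_le_compat_r; unfold ell; lra).
    nra. }
  assert (Hell0 : 0 < ell) by (unfold ell; lra).
  set (G := Gop dPsi delta R0 S).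
  assert (HGe : forall s, G s = dPsi delta (phi s) - sgn s).
  { intro s. unfold G, Gop. rewrite HsR0. reflexivity. }
  assert (HG0 : forall s, s < xm \/ s > xp -> G s = 0).
  { intros s [Hs|Hs]; rewrite HGe.
    - pose proof (Hlt s Hs). rewrite HPsi4 by (auto; unfold phi; lra).
      rewrite sgn_neg by (unfold phi; lra). rewrite sgn_neg by lra. ring.
    - pose proof (Hgt s Hs). rewrite HPsi4 by (auto; unfold phi; lra).
      rewrite sgn_pos by (unfold phi; lra). rewrite sgn_pos by lra. ring. }
  assert (HGb : forall s, Rabs (G s) <= C1).
  { intro s. rewrite HGe. eapply Rle_trans. apply abs_sub_le.
    pose proof (HPsi5 delta Hd (phi s)); pose proof (sgn_bound s). unfold C1; lra. }
  assert (HdPc : forall r, continuous (dPsi delta) r).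
  { intro r. apply cont_of_pt, derivable_continuous_pt. exists (ddPsi delta r). apply HPsi2; auto. }
  assert (Hphic : forall r, continuous phi r).
  { intro r. apply cont_of_pt, derivable_continuous_pt. exists (phi' r). apply Hphid. }
  assert (Hphi'c : forall r, continuous phi' r).
  { apply lip_cont with (LR + LS). intros x y. unfold phi'.
    replace (R0' x + S' x - (R0' y + S' y)) with ((R0' x - R0' y) + (S' x - S' y)) by ring.
    eapply Rle_trans. apply Rabs_triang. pose proof (HLR x y); pose proof (HLS x y). lra. }
  assert (HdPphic : forall r, continuous (fun s => dPsi delta (phi s)) r).
  { intro r. apply continuous_comp; auto. }
  assert (HexG : forall u v, ex_RInt G u v).
  { intros u v. apply ex_RInt_ext with (fun s => dPsi delta (phi s) - sgn (s - 0)).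
    intros x _. rewrite HGe, Rminus_0_r. reflexivity.
    apply ex_RInt_minusR. apply cont_ex; auto. apply ex_RInt_sgn. }
  (* I_delta = 0 gives Psi(delta) - Psi(-delta) = 0 *)
  assert (HPsi0 : Psi delta delta - Psi delta (- delta) = 0).
  { destruct HI as [w [[Hint Hlim] Hw]].
    assert (w = 0) by lra. subst w.
    set (h := fun r => dPsi delta r - sgn r).
    assert (Hexh : forall u v, ex_RInt h u v).
    { intros u v. destruct (Hint u v) as [pr]. apply ex_RInt_Reals_1; exact pr. }
    assert (Hh0 : forall r, r <= - delta \/ r >= delta -> h r = 0).
    { intros r Hr. unfold h. rewrite HPsi4 by (auto; lra). ring. }
    assert (Hz : forall u v, (forall s, Rmin u v < s < Rmax u v -> s <= - delta \/ s >= delta) -> CInt h u v = 0).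
    { intros u v Hs. rewrite (RInt_ext (V:=R_CompleteNormedModule) h (fun _ => 0)). rewrite RInt_constR. simpl; ring.
      intros x Hx. apply Hh0, Hs, Hx. }
    assert (Hm : forall A B, A <= - delta -> B >= delta -> CInt h A B = CInt h (- delta) delta).
    { intros A B HA HB'. rewrite <- (RInt_ChaslesR h A (- delta) B) by auto.
      rewrite <- (RInt_ChaslesR h (- delta) delta B) by auto.
      rewrite (Hz A (- delta)), (Hz delta B). simpl; ring.
      intros s Hs; rewrite Rmin_left, Rmax_right in Hs by lra; lra.
      intros s Hs; rewrite Rmin_left, Rmax_right in Hs by lra; lra. }
    assert (Hh : CInt h (- delta) delta = 0).
    { destruct (Req_dec (CInt h (- delta) delta) 0) as [E|E]; auto.
      destruct (Hlim (Rabs (CInt h (- delta) delta))) as [T HT]. apply Rabs_pos_lt; auto.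
      specialize (HT (- (Rabs T + delta + 1)) (Rabs T + delta + 1)).
      pose proof (Rabs_pos T). pose proof (RRle_abs T). pose proof (Rle_abs (-T)). rewrite Rabs_Ropp in *.
      rewrite RInt_conv in HT by auto. rewrite Hm in HT by lra. rewrite Rminus_0_r in HT.
      assert (Rabs (CInt h (- delta) delta) < Rabs (CInt h (- delta) delta)) by (apply HT; lra). lra. }
    unfold h in Hh. rewrite RInt_minusR in Hh.
    2: apply cont_ex; auto.
    2: { apply ex_RInt_ext with (fun s => sgn (s - 0)). intros; rewrite Rminus_0_r; auto. apply ex_RInt_sgn. }
    rewrite (RInt_derivR (Psi delta) (dPsi delta)) in Hh.
    2: { intro x. apply is_derive_Reals, HPsi1; auto. }
    2: auto.
    assert (Hs : CInt sgn (- delta) delta = 0).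
    { assert (Hsx : forall u v, ex_RInt sgn u v).
      { intros u v. apply ex_RInt_ext with (fun s => sgn (s - 0)). intros; rewrite Rminus_0_r; auto. apply ex_RInt_sgn. }
      rewrite <- (RInt_ChaslesR sgn (- delta) 0 delta) by auto.
      rewrite (RInt_ext (V:=R_CompleteNormedModule) sgn (fun _ => -1) (- delta) 0).
      rewrite (RInt_ext (V:=R_CompleteNormedModule) sgn (fun _ => 1) 0 delta).
      rewrite !RInt_constR. simpl; ring.
      intros x Hx; rewrite Rmin_left, Rmax_right in Hx by lra; apply sgn_pos; lra.
      intros x Hx; rewrite Rmin_left, Rmax_right in Hx by lra; apply sgn_neg; lra. }
    lra. }
  assert (HexGp : forall u v, ex_RInt (fun s => G s * phi' s) u v).
  { intros u v. apply ex_RInt_ext with (fun s => dPsi delta (phi s) * phi' s - sgn (s - 0) * phi' s).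
    intros x _. rewrite HGe, Rminus_0_r. simpl; ring.
    apply ex_RInt_minusR. apply cont_ex. intro r. apply contR_mult; auto.
    apply ex_RInt_sgnmul; auto. }
  assert (Hphim : phi xm = - delta) by exact Hfm.
  assert (Hphip : phi xp = delta) by exact Hfp.
  assert (HGphi : CInt (fun s => G s * phi' s) xm xp = 0).
  { rewrite <- (RInt_ChaslesR _ xm 0 xp) by auto.
    rewrite (RInt_ext (V:=R_CompleteNormedModule) _ (fun s => dPsi delta (phi s) * phi' s + phi' s) xm 0).
    rewrite (RInt_ext (V:=R_CompleteNormedModule) _ (fun s => dPsi delta (phi s) * phi' s - phi' s) 0 xp).
    rewrite (RInt_derivR (fun s => Psi delta (phi s) + phi s)).
    rewrite (RInt_derivR (fun s => Psi delta (phi s) - phi s)).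
    rewrite Hphi0, Hphim, Hphip. simpl. lra.
    - intro x. apply is_derive_Reals.
      exact (derivable_pt_lim_minus _ _ x _ _ (derivable_pt_lim_comp phi (Psi delta) x _ _ (Hphid x) (HPsi1 delta Hd (phi x))) (Hphid x)).
    - intro x. apply (continuous_ext (fun s => dPsi delta (phi s) * phi' s + - phi' s)).
      intros; simpl; ring. apply contR_plus. apply contR_mult; auto. apply contR_opp; auto.
    - intro x. apply is_derive_Reals.
      exact (derivable_pt_lim_plus _ _ x _ _ (derivable_pt_lim_comp phi (Psi delta) x _ _ (Hphid x) (HPsi1 delta Hd (phi x))) (Hphid x)).
    - intro x. apply contR_plus. apply contR_mult; auto. auto.
    - intros x Hx; rewrite Rmin_left, Rmax_right in Hx by lra. rewrite HGe, sgn_pos by lra. simpl; ring.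
    - intros x Hx; rewrite Rmin_left, Rmax_right in Hx by lra. rewrite HGe, sgn_neg by lra. simpl; ring. }
  set (B1 := D0 / (1 - c1^2) + 1).
  assert (HB1 : forall u, Rabs (R0 u - sgn u) <= B1).
  { intro u. eapply Rle_trans. apply abs_sub_le. pose proof (sgn_bound u). pose proof (HB u).
    assert (D0 / (1 - c^2) <= D0 / (1 - c1^2)).
    { unfold Rdiv. apply Rmult_le_compat_l. lra. apply Rinv_le_contravar. nra. nra. }
    unfold B1; lra. }
  assert (HR0c : forall x, continuous R0 x).
  { intro r. apply cont_of_pt, derivable_continuous_pt. exists (R0' r). apply HR0d. }
  set (Q := Delta1 (fun t => R0 t - sgn (R0 t))).
  assert (HQe : forall t, Q t = (R0 (t + 1) - sgn (t + 1)) - 2 * (R0 t - sgn t) + (R0 (t + -1) - sgn (t + -1))).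
  { intro t. unfold Q, Delta1. rewrite !HsR0. replace (t - 1) with (t + -1) by ring. reflexivity. }
  assert (HexQ : forall u v, ex_RInt Q u v).
  { intros u v. apply ex_RInt_ext with (fun t => (R0 (t + 1) - sgn (t - -1)) - 2 * (R0 t - sgn (t - 0)) + (R0 (t + -1) - sgn (t - 1))).
    { intros t _. rewrite HQe. replace (t - -1) with (t + 1) by ring. replace (t - 0) with t by ring.
      replace (t - 1) with (t + -1) by ring. reflexivity. }
    apply ex_RInt_plusR. apply ex_RInt_minusR. apply ex_RInt_minusR.
    apply cont_ex, cont_shift; auto. apply ex_RInt_sgn.
    apply ex_RInt_scalR. apply ex_RInt_minusR. apply cont_ex; auto. apply ex_RInt_sgn.
    apply ex_RInt_minusR. apply cont_ex, cont_shift; auto. apply ex_RInt_sgn. }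
  assert (HQb : forall t, Rabs (Q t) <= 4 * B1).
  { intro t. rewrite HQe. eapply Rle_trans. apply abs3.
    pose proof (HB1 (t + 1)); pose proof (HB1 t); pose proof (HB1 (t + -1)). lra. }
  set (L0 := 4 * B1 / c0^2).
  assert (HB1p : 0 <= B1).
  { eapply Rle_trans. apply Rabs_pos. apply (HB1 0). }
  assert (HL0p : 0 <= L0).
  { unfold L0. unfold Rdiv. apply Rmult_le_pos. lra. left; apply Rinv_0_lt_compat. nra. }
  assert (HL0g : forall x y, x <= y -> Rabs (R0' y - R0' x) <= L0 * (y - x)).
  { intros x y Hxy. pose proof (HE x y) as E. rewrite RInt_conv in E by auto.
    assert (Hq : Rabs (CInt Q x y) <= (y - x) * (4 * B1)) by (apply abs_RInt_le_const; auto).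
    fold Q in E. rewrite <- E in Hq. rewrite Rabs_mult, (Rabs_right (c^2)) in Hq by nra.
    assert (Hcc : c0^2 <= c^2) by nra.
    assert (Hk : c0^2 * Rabs (R0' y - R0' x) <= (y - x) * (4 * B1)).
    { eapply Rle_trans; [|exact Hq]. apply Rmult_le_compat_r; auto. apply Rabs_pos. }
    apply Rmult_le_reg_l with (c0^2). nra.
    replace (c0 ^ 2 * (L0 * (y - x))) with ((y - x) * (4 * B1)). auto.
    unfold L0; field. lra. }
  assert (HL0 : forall x y, Rabs (R0' x - R0' y) <= L0 * Rabs (x - y)).
  { intros x y. destruct (Rle_dec y x).
    - rewrite (Rabs_right (x - y)) by lra. apply HL0g; auto.
    - rewrite (Rabs_left (x - y)) by lra. rewrite <- Rabs_Ropp. replace (- (R0' x - R0' y)) with (R0' y - R0' x) by ring.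
      replace (- (x - y)) with (y - x) by ring. apply HL0g; lra. }
  set (F := fun t => CInt G xm t).
  assert (HAop : Aop G = fun t => F (t + 1/2) - F (t - 1/2)).
  { apply functional_extensionality. intro t. unfold Aop. rewrite RInt_conv by auto.
    unfold F. rewrite <- (RInt_ChaslesR G (t - 1/2) xm (t + 1/2)) by auto.
    rewrite (RInt_swapR G xm (t - 1/2)) by auto. simpl; ring. }
  assert (HFlip : forall u v, Rabs (F u - F v) <= C1 * Rabs (u - v)).
  { intros u v. unfold F. rewrite <- (RInt_ChaslesR G xm v u) by auto.
    assert (E : CInt G xm v + CInt G v u - CInt G xm v = CInt G v u) by ring. rewrite E.
    apply RInt_bound_gen; auto. }
  assert (HC1 : 0 <= C1) by (unfold C1; lra).
  split.
  { intro x. unfold Aop. rewrite RInt_conv by auto.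
    eapply Rle_trans. apply (supp_bound G xm xp C1); auto; lra.
    apply arith1; auto; lra. }
  intros M HM x.
  assert (HM0 : 0 <= M).
  { pose proof (HM 1 0). pose proof (Rabs_pos (S' 1 - S' 0)).
    replace (1 - 0) with 1 in H by ring. rewrite Rabs_R1 in H. lra. }
  assert (Hphi'L : forall u v, Rabs (phi' u - phi' v) <= (L0 + M) * Rabs (u - v)).
  { intros u v. unfold phi'.
    replace (R0' u + S' u - (R0' v + S' v)) with ((R0' u - R0' v) + (S' u - S' v)) by ring.
    eapply Rle_trans. apply Rabs_triang. pose proof (HL0 u v); pose proof (HM u v). lra. }
  assert (Hp0 : phi' 0 > d0 / 2).
  { destruct (Hmid 0 ltac:(lra)) as [H1 _]. unfold phi'. lra. }
  set (Itot := CInt G xm xp).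
  assert (HIt : Rabs Itot <= ell * (C1 * ((L0 + M) * ell) * (2 / d0))).
  { assert (E : Itot = CInt (fun s => G s - / phi' 0 * (G s * phi' s)) xm xp).
    { rewrite RInt_minusR, RInt_scalR, HGphi; auto. unfold Itot. rewrite Rmult_0_r, Rminus_0_r; reflexivity. apply ex_RInt_scalR; auto. }
    rewrite E. unfold ell. apply abs_RInt_le_const. lra.
    apply ex_RInt_minusR; auto. apply ex_RInt_scalR; auto.
    intros t Ht.
    replace (G t - / phi' 0 * (G t * phi' t)) with (G t * (phi' 0 - phi' t) * / phi' 0) by (field; lra).
    rewrite !Rabs_mult. rewrite (Rabs_right (/ phi' 0)) by (left; apply Rinv_0_lt_compat; lra).
    assert (Hq : Rabs (phi' 0 - phi' t) <= (L0 + M) * (xp - xm)).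
    { eapply Rle_trans. apply Hphi'L. apply Rmult_le_compat_l. lra.
      unfold Rabs; destruct Rcase_abs; lra. }
    assert (Hi : / phi' 0 <= 2 / d0).
    { replace (2 / d0) with (/ (d0 / 2)) by (field; lra). apply Rinv_le_contravar; lra. }
    apply Rmult_le_compat. apply Rmult_le_pos; apply Rabs_pos. left; apply Rinv_0_lt_compat; lra.
    apply Rmult_le_compat; auto; apply Rabs_pos. auto. }
  set (lin := fun t => Itot * (clamp xm xp t - xm) / ell).
  set (D := fun t => F t - lin t).
  assert (Hzero : forall u v, (forall s, Rmin u v < s < Rmax u v -> s < xm \/ s > xp) -> CInt G u v = 0).
  { intros u v Hs. rewrite (RInt_ext (V:=R_CompleteNormedModule) G (fun _ => 0)).
    rewrite RInt_constR. simpl; ring. intros y Hy. apply HG0, Hs, Hy. }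
  assert (HFlt : forall t, t < xm -> F t = 0).
  { intros t Ht. unfold F. apply Hzero. intros s Hs. rewrite Rmin_right, Rmax_left in Hs by lra. lra. }
  assert (HFgt : forall t, t > xp -> F t = Itot).
  { intros t Ht. unfold F, Itot. rewrite <- (RInt_ChaslesR G xm xp t) by auto.
    rewrite (Hzero xp t). simpl; ring.
    intros s Hs. rewrite Rmin_left, Rmax_right in Hs by lra. lra. }
  assert (HItb : Rabs Itot <= C1 * ell).
  { unfold Itot, ell. apply (supp_bound G xm xp C1); auto; lra. }
  assert (HFb : forall t, Rabs (F t) <= C1 * ell).
  { intro t. destruct (Rlt_le_dec t xm). rewrite HFlt by auto. rewrite Rabs_R0.
    apply Rmult_le_pos; lra.
    unfold F, ell. apply (supp_bound G xm xp C1); auto; lra. }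
  assert (Hlinb : forall u v, Rabs (lin u - lin v) <= Rabs Itot / ell * Rabs (u - v) /\ Rabs (lin u - lin v) <= Rabs Itot).
  { intros u v. unfold lin.
    replace (Itot * (clamp xm xp u - xm) / ell - Itot * (clamp xm xp v - xm) / ell)
      with (Itot / ell * (clamp xm xp u - clamp xm xp v)) by (field; lra).
    rewrite Rabs_mult. unfold Rdiv. rewrite Rabs_mult, (Rabs_right (/ ell)) by (left; apply Rinv_0_lt_compat; lra).
    pose proof (clamp_lip xm xp u v). pose proof (clamp_in xm xp u ltac:(lra)). pose proof (clamp_in xm xp v ltac:(lra)).
    assert (0 <= Rabs Itot * / ell) by (apply Rmult_le_pos; [apply Rabs_pos| left; apply Rinv_0_lt_compat; lra]).
    split.
    - apply Rmult_le_compat_l; auto. lra.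
    - assert (Rabs (clamp xm xp u - clamp xm xp v) <= ell) by (unfold ell; unfold Rabs; destruct Rcase_abs; lra).
      apply Rle_trans with (Rabs Itot * / ell * ell). apply Rmult_le_compat_l; auto.
      right. field. lra. }
  assert (Hlinxm : lin xm = 0).
  { unfold lin, clamp, Rmax, Rmin. repeat destruct Rle_dec; try lra; field_simplify; lra. }
  assert (Hlinabs : forall t, Rabs (lin t) <= Rabs Itot).
  { intro t. destruct (Hlinb t xm) as [_ H]. rewrite Hlinxm, Rminus_0_r in H. auto. }
  assert (HDz : forall t, t < xm \/ t > xp -> D t = 0).
  { intros t [Ht|Ht]; unfold D.
    - rewrite HFlt by auto. unfold lin, clamp, Rmax, Rmin. repeat destruct Rle_dec; try lra; field_simplify; lra.
    - rewrite HFgt by auto. unfold lin, clamp, Rmax, Rmin. repeat destruct Rle_dec; try lra; unfold ell; field; lra. }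
  assert (HDb : forall t, Rabs (D t) <= 2 * C1 * ell).
  { intro t. unfold D. eapply Rle_trans. apply abs_sub_le. pose proof (HFb t). pose proof (Hlinabs t). lra. }
  assert (HDlip : forall u v, Rabs (D u - D v) <= (C1 + Rabs Itot / ell) * Rabs (u - v)).
  { intros u v. unfold D.
    replace (F u - lin u - (F v - lin v)) with ((F u - F v) - (lin u - lin v)) by ring.
    eapply Rle_trans. apply abs_sub_le. pose proof (HFlip u v). destruct (Hlinb u v). lra. }
  assert (HexD1 : forall u v, ex_RInt (fun t => D (t + 1/2)) u v).
  { apply lip_exRInt with (C1 + Rabs Itot / ell). apply lip_shift; auto. }
  assert (HexD2 : forall u v, ex_RInt (fun t => D (t - 1/2)) u v).
  { apply lip_exRInt with (C1 + Rabs Itot / ell). apply lip_shiftm; auto. }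
  assert (Hexl : forall u v, ex_RInt (fun t => lin (t + 1/2) - lin (t - 1/2)) u v).
  { intros u v. apply ex_RInt_minusR.
    apply lip_exRInt with (Rabs Itot / ell). apply lip_shift. intros; apply Hlinb.
    apply lip_exRInt with (Rabs Itot / ell). apply lip_shiftm. intros; apply Hlinb. }
  assert (HexA : forall u v, ex_RInt (fun t => F (t + 1/2) - F (t - 1/2)) u v).
  { intros u v. apply ex_RInt_minusR.
    apply lip_exRInt with C1. apply lip_shift; auto.
    apply lip_exRInt with C1. apply lip_shiftm; auto. }
  assert (Eq_lin : forall t, (lin (t + 1/2) - lin (t - 1/2)) + (D (t + 1/2) - D (t - 1/2)) = F (t + 1/2) - F (t - 1/2)).
  { intros t. unfold D. ring. }
  unfold Aop at 1. rewrite HAop. rewrite RInt_conv by auto.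
  rewrite (RInt_ext (V:=R_CompleteNormedModule) (fun t => F (t + 1/2) - F (t - 1/2)) (fun t => (lin (t + 1/2) - lin (t - 1/2)) + (D (t + 1/2) - D (t - 1/2)))).
  2: { intros t _. symmetry. apply Eq_lin. }
  rewrite (RInt_plusR (fun t => lin (t + 1/2) - lin (t - 1/2)) (fun t => D (t + 1/2) - D (t - 1/2))).
  2: apply Hexl.
  2: { apply ex_RInt_minusR. apply HexD1. apply HexD2. }
  rewrite (RInt_minusR (fun t => D (t + 1/2)) (fun t => D (t - 1/2))).
  2: apply HexD1.
  2: apply HexD2.
  assert (HA1 : Rabs (CInt (fun t => lin (t + 1/2) - lin (t - 1/2)) (x - 1/2) (x + 1/2)) <= Rabs Itot).
  { eapply Rle_trans. apply (abs_RInt_le_const _ (x - 1/2) (x + 1/2) (Rabs Itot)). lra. apply Hexl.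
    intros t _. apply (proj2 (Hlinb _ _)). right; field. }
  assert (HA2 : Rabs (CInt (fun t => D (t + 1/2)) (x - 1/2) (x + 1/2)) <= 2 * C1 * ell * ell).
  { eapply Rle_trans. apply (supp_bound _ (xm - 1/2) (xp - 1/2) (2 * C1 * ell)). lra. lra. apply HexD1.
    intros s Hs. apply HDz. lra. intro s. apply HDb. right. unfold ell. ring. }
  assert (HA3 : Rabs (CInt (fun t => D (t - 1/2)) (x - 1/2) (x + 1/2)) <= 2 * C1 * ell * ell).
  { eapply Rle_trans. apply (supp_bound _ (xm + 1/2) (xp + 1/2) (2 * C1 * ell)). lra. lra. apply HexD2.
    intros s Hs. apply HDz. lra. intro s. apply HDb. right. unfold ell. ring. }
  eapply Rle_trans. apply abs_pm.
  assert (Hd0' : 0 < d0) by lra. assert (Hell' : 0 <= ell) by lra.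
  pose proof (arith2 C1 L0 M d0 ell delta Itot HC1 HL0p HM0 Hd0' Hell' Hd Hell HIt) as HF.
  apply Rle_trans with (Rabs Itot + 2*C1*ell*ell + 2*C1*ell*ell).
  { apply Rplus_le_compat. apply Rplus_le_compat. exact HA1. exact HA2. exact HA3. }
  exact HF.
Qed.
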